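(* Let $b\ge 1$ and, for $i\in[b]=\{1,\dots,b\}$, let $\mathcal X_i=\mathbb R^{m_i\times n_i}$ be equipped with the trace inner product $\langle X_i,Y_i\rangle_{(i)}=\operatorname{tr}(X_i^\top Y_i)$ and an arbitrary norm $\|\cdot\|_{(i)}$ with dual norm $\|Y_i\|_{(i)\star}=\sup_{\|Z_i\|_{(i)}\le 1}\langle Y_i,Z_i\rangle_{(i)}$. Let $\mathcal X=\mathcal X_1\times\cdots\times\mathcal X_b$ with elements $X=[X_1,\dots,X_b]$ and inner product $\langle X,Y\rangle=\sum_i\langle X_i,Y_i\rangle_{(i)}$. Let $f:\mathcal X\to\mathbb R$ be continuously differentiable, with $i$-th gradient block $\nabla_i f(X)\in\mathcal X_i$, and assume there is $f^\star\in\mathbb R$ with $f(X)\ge f^\star$ for all $X\in\mathcal X$. Let $p_1,\dots,p_b\ge 0$ with $\sum_{i=1}^b p_i=1$ and $p_1>0$, and let $\mathcal D$ be the distribution of the random set $\{s,\dots,b\}$ where $s\in[b]$ is drawn with $\Pr(s=i)=p_i$ (randomized progressive training). Assume $f$ is $\operatorname{supp}(\mathcal D)$-layer-wise $L^0$-smooth: there are constants $L^0_{i,S}\ge 0$ ($i\in[b]$, $S\in\operatorname{supp}(\mathcal D)$), with $L^0_{i,S}=0$ for $i\notin S$, such that for every $S\in\operatorname{supp}(\mathcal D)$, all $X\in\mathcal X$ and all $\Gamma=[\Gamma_1,\dots,\Gamma_b]\in\mathcal X$ with $\Gamma_i=0$ for $i\notin S$, $$f(X+\Gamma)-f(X)-\langle\nabla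 f(X),\Gamma\rangle\le\sum_{i\in S}\frac{L^0_{i,S}}{2}\|\Gamma_i\|_{(i)}^2 .$$ Consider the iterates $\{X^k\}$ generated from $X^0\in\mathcal X$ as follows: for $k=0,1,\dots$, draw $S^k\sim\mathcal D$ independently of the past, set $X_i^{k+1}=X_i^k-\gamma_i^k(\nabla_i f(X^k))^\sharp$ for $i\in S^k$ and $X_i^{k+1}=X_i^k$ for $i\notin S^k$, with stepsizes $\gamma_i^k=1/L^0_{i,S^k}$. Then for every $K\ge 1$, $$\frac1K\sum_{k=0}^{K-1}\sum_{i=1}^b\frac{w_i}{\frac1b\sum_{j=1}^b w_j}\,\mathbb E\big[\|\nabla_i f(X^k)\|_{(i)\star}^2\big]\le\frac{f(X^0)-f^\star}{K\left(\frac1b\sum_{j=1}^b w_j\right)},\qquad w_i:=\sum_{s=1}^i\frac{p_s}{2L^0_{i,\{s,\dots,b\}}}.$$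
   Context: For $G\in\mathcal X_i$, $G^\sharp$ (the sharp operator) denotes an element of $\arg\max_{Z\in\mathcal X_i}\{\langle G,Z\rangle_{(i)}-\tfrac12\|Z\|_{(i)}^2\}$. $\operatorname{supp}(\mathcal D)$ is the collection of subsets of $[b]$ having positive probability under $\mathcal D$; here it is $\{\{j,\dots,b\}:p_j>0\}$. Expectations are over the random sets $S^k$. *)

(* Defs.v *)
From HB Require Import structures.
From mathcomp Require Import all_boot all_order all_algebra.
From mathcomp Require Import all_classical all_reals.
Set Implicit Arguments. Unset Strict Implicit. Unset Printing Implicit Defensive.
Import Order.TTheory GRing.Theory Num.Theory.
Local Open Scope classical_set_scope.
Local Open Scope ring_scope.

(* Block space X = X_1 x ... x X_b, X_i = R^{m_i x n_i}; blocks indexed by 'I_b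
   (block i of the paper is the ordinal i-1). *)
Definition blocks (R : realType) (b : nat) (m n : 'I_b -> nat) :=
  forall i : 'I_b, 'M[R]_(m i, n i).

Section Blocks.
Variables (R : realType) (b : nat) (m n : 'I_b -> nat).
Local Notation X := (blocks R m n).

Definition badd (x y : X) : X := fun i => x i + y i.

Definition ipb (i : 'I_b) (x y : 'M[R]_(m i, n i)) : R := \tr ((x^T) *m y).
Definition ip (x y : X) : R := \sum_(i < b) ipb (x i) (y i).

(* an auxiliary (entrywise l1) norm on X, only used to express
   Frechet differentiability and continuity *)
Definition l1 (x : X) : R :=
  \sum_(i < b) \sum_(j < m i) \sum_(k < n i) `|x i j k|.

Definition has_gradient (f : X -> R) (grad : X -> X) : Prop :=
  forall x (e : R), 0 < e -> exists2 d : R, 0 < d &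
    forall h : X, l1 h < d ->
      `|f (badd x h) - f x - ip (grad x) h| <= e * l1 h.

Definition continuousX (g : X -> X) : Prop :=
  forall x (e : R), 0 < e -> exists2 d : R, 0 < d &
    forall y : X, l1 (fun i => y i - x i) < d -> l1 (fun i => g y i - g x i) < e.

End Blocks.

Definition is_norm (R : realType) (p q : nat) (N : 'M[R]_(p, q) -> R) : Prop :=
  [/\ forall x, 0 <= N x,
      forall x, N x = 0 -> x = 0,
      forall (a : R) x, N (a *: x) = `|a| * N x &
      forall x y, N (x + y) <= N x + N y].

Definition dualn (R : realType) (p q : nat) (N : 'M[R]_(p, q) -> R)
  (Y : 'M[R]_(p, q)) : R :=
  sup [set r | exists Z : 'M[R]_(p, q), N Z <= 1 /\ r = \tr (Y^T *m Z)].

Definition is_sharp (R : realType) (p q : nat) (N : 'M[R]_(p, q) -> R)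
  (sharp : 'M[R]_(p, q) -> 'M[R]_(p, q)) : Prop :=
  forall G Z : 'M[R]_(p, q),
    \tr (G^T *m Z) - N Z ^+ 2 / 2 <= \tr (G^T *m sharp G) - N (sharp G) ^+ 2 / 2.

(* the random set {s, ..., b} (0-indexed: {s, ..., b-1}) *)
Definition tail_set (b : nat) (s : 'I_b) : {set 'I_b} := finset (fun i : 'I_b => (s <= i)%N).

Definition in_supp (R : realType) (b : nat) (p : 'I_b -> R) (S : {set 'I_b}) : Prop :=
  exists2 s : 'I_b, 0 < p s & S = tail_set s.

Definition pstep (R : realType) (b : nat) (m n : 'I_b -> nat)
  (grad : blocks R m n -> blocks R m n)
  (sharp : forall i : 'I_b, 'M[R]_(m i, n i) -> 'M[R]_(m i, n i))
  (L : 'I_b -> {set 'I_b} -> R) (x : blocks R m n) (s : 'I_b) : blocks R m n :=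
  fun i => if i \in tail_set s then x i - (1 / L i (tail_set s)) *: sharp i (grad x i)
           else x i.

Definition piter (R : realType) (b : nat) (m n : 'I_b -> nat)
  (grad : blocks R m n -> blocks R m n)
  (sharp : forall i : 'I_b, 'M[R]_(m i, n i) -> 'M[R]_(m i, n i))
  (L : 'I_b -> {set 'I_b} -> R) (x0 : blocks R m n) (ss : seq 'I_b) : blocks R m n :=
  foldl (pstep grad sharp L) x0 ss.

(* expectation of g(X^k) over i.i.d. draws s_0..s_{k-1} with P(s = i) = p i *)
Definition expect_k (R : realType) (b : nat) (m n : 'I_b -> nat)
  (p : 'I_b -> R) (grad : blocks R m n -> blocks R m n)
  (sharp : forall i : 'I_b, 'M[R]_(m i, n i) -> 'M[R]_(m i, n i))
  (L : 'I_b -> {set 'I_b} -> R) (x0 : blocks R m n) (k : nat)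
  (g : blocks R m n -> R) : R :=
  \sum_(t : k.-tuple 'I_b) (\prod_(s <- t) p s) * g (piter grad sharp L x0 t).

Definition wgt (R : realType) (b : nat) (p : 'I_b -> R)
  (L : 'I_b -> {set 'I_b} -> R) (i : 'I_b) : R :=
  \sum_(s < b | (s <= i)%N) p s / (2 * L i (tail_set s)).

(* Main.v *)
Require Import Defs.
From HB Require Import structures.
From mathcomp Require Import all_boot all_order all_algebra.
From mathcomp Require Import all_classical all_reals.
From mathcomp Require Import ring lra.
Import Order.TTheory GRing.Theory Num.Theory.
Local Open Scope classical_set_scope.
Local Open Scope ring_scope.

Lemma sum_tupleS (R : realType) (T : finType) (k : nat) (F : (k.+1).-tuple T -> R) :
  \sum_(t : (k.+1).-tuple T) F t = \sum_(x : T) \sum_(t : k.-tuple T) F (cons_tuple x t).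
Proof.
rewrite pair_big /=.
have hb : bijective (fun u : T * k.-tuple T => cons_tuple u.1 u.2).
  exists (fun t : (k.+1).-tuple T => (thead t, behead_tuple t)).
    by case=> x t /=; congr pair; apply: val_inj.
  move=> t /=; apply: val_inj => /=; by case: t => [[|? ?] //=].
by rewrite (reindex _ (onW_bij _ hb)).
Qed.

Lemma dual_bound (R : realType) (p q : nat) (N : 'M[R]_(p, q) -> R)
  (sh : 'M[R]_(p, q) -> 'M[R]_(p, q)) (G : 'M[R]_(p,q)) :
  is_norm N -> is_sharp N sh ->
  0 <= dualn N G /\
  dualn N G ^+ 2 <= 2 * (\tr (G^T *m sh G) - N (sh G) ^+ 2 / 2).
Proof.
move=> [N0 _ NZ _] hs.
have N00 : N 0 = 0 by rewrite -(scale0r (0 : 'M[R]_(p,q))) NZ normr0 mul0r.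
set M := (X in 2 * X).
have M0 : 0 <= M.
  by have := hs G 0; rewrite mulmx0 mxtrace0 N00 expr0n /= mul0r subr0.
set A := [set r | exists Z : 'M[R]_(p, q), N Z <= 1 /\ r = \tr (G^T *m Z)].
have A0 : A 0 by exists 0; rewrite N00 mulmx0 mxtrace0.
have ub : ubound A (Num.sqrt (2 * M)).
  move=> r [Z [NZ1 ->]].
  set t := \tr (G^T *m Z).
  case: (boolP (t <= 0)) => t0.
    by apply: (le_trans t0); apply: sqrtr_ge0.
  rewrite -ltNge in t0.
  have := hs G (t *: Z).
  rewrite -scalemxAr mxtraceZ NZ (ger0_norm (ltW t0)) -/t -/M => h.
  have h2 : t ^+ 2 <= 2 * M.
    have : N Z ^+ 2 <= 1.
      by rewrite -(expr1n R 2); apply: lerXn2r; rewrite ?nnegrE.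
    move=> hN.
    have : t * t - t ^+ 2 / 2 <= M.
      apply: le_trans h; rewrite lerD2l lerN2 exprMn.
      rewrite ler_pM2r ?invr_gt0 // ler_piMr //; first by rewrite exprn_ge0 // ltW.
    move=> h3.
    have -> : t ^+ 2 = 2 * (t * t - t ^+ 2 / 2) by rewrite expr2; field.
    by rewrite ler_pM2l.
  apply: le_trans (ler_wsqrtr h2); by rewrite sqrtr_sqr ger0_norm // ltW.
have d0 : 0 <= dualn N G.
  apply: ub_le_sup => //; by exists (Num.sqrt (2 * M)).
split => //.
have : dualn N G <= Num.sqrt (2 * M) by apply: ge_sup => //; exists 0.
move=> hd.
rewrite -(sqr_sqrtr (a := 2 * M)) ?mulr_ge0 //.
by apply: lerXn2r; rewrite ?nnegrE ?sqrtr_ge0.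
Qed.
Section Main.
Variables (R : realType) (b : nat) (m n : 'I_b -> nat)
  (nrm : forall i : 'I_b, 'M[R]_(m i, n i) -> R)
  (f : blocks R m n -> R) (grad : blocks R m n -> blocks R m n) (fstar : R)
  (p : 'I_b -> R) (L : 'I_b -> {set 'I_b} -> R)
  (sharp : forall i : 'I_b, 'M[R]_(m i, n i) -> 'M[R]_(m i, n i)).
Hypotheses (Hn : forall i, is_norm (nrm i))
  (Hp0 : forall i, 0 <= p i) (Hp1 : \sum_(i < b) p i = 1)
  (HL0 : forall S, in_supp p S -> forall i, 0 <= L i S)
  (Hsm : forall S, in_supp p S -> forall (x G : blocks R m n),
      (forall i, i \notin S -> G i = 0) ->
      f (badd x G) - f x - ip (grad x) G
        <= \sum_(i in S) L i S / 2 * nrm i (G i) ^+ 2)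
  (Hsh : forall i, is_sharp (nrm i) (sharp i)).

Let d (x : blocks R m n) (i : 'I_b) := dualn (nrm i) (grad x i).

Lemma descent x s : 0 < p s ->
  f (pstep grad sharp L x s) <=
  f x - \sum_(i in tail_set s) d x i ^+ 2 / (2 * L i (tail_set s)).
Proof.
move=> ps.
set S := tail_set s.
have hS : in_supp p S by exists s.
pose G : blocks R m n := fun i => if i \in S then - (L i S)^-1 *: sharp i (grad x i) else 0.
have -> : pstep grad sharp L x s = badd x G.
  apply: functional_extensionality_dep => i.
  rewrite /pstep /badd /G -/S; case: ifP => _; last by rewrite addr0.
  by rewrite div1r scaleNr.
have hG : forall i, i \notin S -> G i = 0 by move=> i /negbTE hi; rewrite /G hi.
have := Hsm S hS x G hG.
have -> : ip (grad x) G = \sum_(i in S) ipb (grad x i) (G i).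
  rewrite /ip [RHS]big_mkcond; apply: eq_bigr => i _.
  by rewrite /G; case: ifP => // _; rewrite /ipb mulmx0 mxtrace0.
move=> h.
have h2 : f (badd x G) - f x <= \sum_(i in S) (ipb (grad x i) (G i) + L i S / 2 * nrm i (G i) ^+ 2).
  by rewrite big_split /=; lra.
suff h3 : \sum_(i in S) (ipb (grad x i) (G i) + L i S / 2 * nrm i (G i) ^+ 2)
   <= - \sum_(i in S) d x i ^+ 2 / (2 * L i S) by lra.
rewrite -sumrN; apply: ler_sum => i iS.
rewrite /G iS.
have LS := HL0 S hS i.
have [hd0 hd] := dual_bound _ _ _ _ _ (grad x i) (Hn i) (Hsh i).
rewrite -/(d x i) in hd hd0.
case: (Hn i) => _ _ NZ _.
rewrite NZ /ipb -scalemxAr mxtraceZ normrN ger0_norm ?invr_ge0 //.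
set c := (L i S)^-1.
set T := \tr ((grad x i)^T *m sharp i (grad x i)).
set N := nrm i (sharp i (grad x i)).
set D := d x i.
rewrite invfM.
have [L0|Lp] := eqVneq (L i S) 0.
  rewrite /c L0 invr0; rewrite !(mul0r, mulr0, oppr0, add0r, addr0, expr0n) /=; lra.
have cL : L i S * c = 1 by rewrite /c divff.
have -> : L i S / 2 * (c * N) ^+ 2 = c * (N ^+ 2 / 2).
  transitivity (L i S * c * c * (N ^+ 2 / 2)); first ring.
  by rewrite cL mul1r.
have c0 : 0 <= c by rewrite /c invr_ge0.
have key : c * D ^+ 2 <= c * (2 * (T - N ^+ 2 / 2)) by apply: ler_wpM2l.
rewrite -/c; lra.
Qed.


Let D (x : blocks R m n) := \sum_(i < b) wgt p L i * d x i ^+ 2.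

Lemma step_exp x : \sum_(s < b) p s * f (pstep grad sharp L x s) <= f x - D x.
Proof.
have e1 : D x = \sum_(s < b) p s * \sum_(i in tail_set s) d x i ^+ 2 / (2 * L i (tail_set s)).
  rewrite /D /wgt.
  under eq_bigr => i _ do rewrite big_distrl /= big_mkcond /=.
  rewrite exchange_big; apply: eq_bigr => s _.
  rewrite mulr_sumr [RHS]big_mkcond; apply: eq_bigr => i _.
  rewrite inE; case: ifP => _; last (by rewrite ?mulr0 ?mul0r).
  by rewrite [RHS]mulrA mulrAC.
have e2 : f x = \sum_(s < b) p s * f x by rewrite -big_distrl /= Hp1 mul1r.
rewrite e1 [X in X - _]e2 -sumrB; apply: ler_sum => s _.
have [ps0|ps] := eqVneq (p s) 0; first by rewrite ps0 !mul0r subrr.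
have psp : 0 < p s by rewrite lt_def ps Hp0.
rewrite -mulrBr; apply: ler_wpM2l; first exact: Hp0.
exact: descent.
Qed.

Lemma expect0 x0 g : expect_k p grad sharp L x0 0 g = g x0.
Proof.
rewrite /expect_k (big_pred1 [tuple]) /=; first by rewrite big_nil mul1r.
by move=> t; apply/esym/eqP; apply: tuple0.
Qed.

Lemma expectS x0 k g : expect_k p grad sharp L x0 k.+1 g =
  \sum_(s < b) p s * expect_k p grad sharp L (pstep grad sharp L x0 s) k g.
Proof.
rewrite /expect_k sum_tupleS; apply: eq_bigr => s _.
rewrite mulr_sumr; apply: eq_bigr => t _ /=.
by rewrite big_cons mulrA.
Qed.

Hypothesis (Hfs : forall x, fstar <= f x).

Lemma telesc K : forall x0, \sum_(k < K) expect_k p grad sharp L x0 k D <= f x0 - fstar.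
Proof.
elim: K => [|K IH] x0.
  by rewrite big_ord0 subr_ge0.
rewrite big_ord_recl /= expect0.
under eq_bigr => k _ do rewrite /bump /= expectS.
rewrite exchange_big /=.
apply: (@le_trans _ _ (D x0 + \sum_(s < b) p s * (f (pstep grad sharp L x0 s) - fstar))).
  rewrite lerD2l; apply: ler_sum => s _.
  rewrite -mulr_sumr; apply: ler_wpM2l; first exact: Hp0.
  exact: IH.
have h := step_exp x0.
under eq_bigr => s _ do rewrite mulrBr.
rewrite sumrB -big_distrl /= Hp1 mul1r.
lra.
Qed.

End Main.


Theorem theorem1 (R : realType) (b : nat) (m n : 'I_b -> nat)
  (nrm : forall i : 'I_b, 'M[R]_(m i, n i) -> R)
  (f : blocks R m n -> R) (grad : blocks R m n -> blocks R m n) (fstar : R)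
  (p : 'I_b -> R) (L : 'I_b -> {set 'I_b} -> R)
  (sharp : forall i : 'I_b, 'M[R]_(m i, n i) -> 'M[R]_(m i, n i))
  (x0 : blocks R m n) :
  (0 < b)%N ->
  (forall i, is_norm (nrm i)) ->
  has_gradient f grad -> continuousX grad ->
  (forall x, fstar <= f x) ->
  (forall i, 0 <= p i) -> \sum_(i < b) p i = 1 ->
  (forall i : 'I_b, nat_of_ord i = 0%N -> 0 < p i) ->
  (forall S, in_supp p S -> forall i, 0 <= L i S) ->
  (forall S, in_supp p S -> forall i, i \notin S -> L i S = 0) ->
  (forall S, in_supp p S -> forall (x G : blocks R m n),
      (forall i, i \notin S -> G i = 0) ->
      f (badd x G) - f x - ip (grad x) G
        <= \sum_(i in S) L i S / 2 * nrm i (G i) ^+ 2) ->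
  (forall i, is_sharp (nrm i) (sharp i)) ->
  forall K : nat, (0 < K)%N ->
    K%:R^-1 * \sum_(k < K) \sum_(i < b)
        wgt p L i / (b%:R^-1 * \sum_(j < b) wgt p L j)
        * expect_k p grad sharp L x0 k (fun x => dualn (nrm i) (grad x i) ^+ 2)
    <= (f x0 - fstar) / (K%:R * (b%:R^-1 * \sum_(j < b) wgt p L j)).
Proof.
move=> b0 Hn _ _ Hfs Hp0 Hp1 _ HL0 _ Hsm Hsh K K0.
set W := b%:R^-1 * \sum_(j < b) wgt p L j.
have W0 : 0 <= W.
  apply: mulr_ge0; first by rewrite invr_ge0 ler0n.
  apply: sumr_ge0 => i _; apply: sumr_ge0 => s _.
  have [ps0|ps] := eqVneq (p s) 0; first by rewrite ps0 mul0r.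
  have psp : 0 < p s by rewrite lt_def ps Hp0.
  apply: divr_ge0; first exact: Hp0.
  apply: mulr_ge0 => //; apply: HL0; by exists s.
have T := @telesc _ _ _ _ _ _ _ _ _ _ _ Hn Hp0 Hp1 HL0 Hsm Hsh Hfs K x0.
have e : forall k, \sum_(i < b) wgt p L i / W
        * expect_k p grad sharp L x0 k (fun x => dualn (nrm i) (grad x i) ^+ 2)
   = W^-1 * expect_k p grad sharp L x0 k
       (fun x => \sum_(i < b) wgt p L i * dualn (nrm i) (grad x i) ^+ 2).
  move=> k; rewrite /expect_k mulr_sumr.
  under eq_bigr do rewrite mulr_sumr.
  rewrite exchange_big; apply: eq_bigr => t _.
  rewrite mulr_sumr mulr_sumr; apply: eq_bigr => i _; ring.
under eq_bigr do rewrite e.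
rewrite -mulr_sumr mulrA -invfM [X in _ <= X]mulrC.
apply: ler_wpM2l => //.
by rewrite invr_ge0 mulr_ge0 ?ler0n.
Qed.
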